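(* In the setting of the context: (i) all diagonal elements of $\mathbf{A}(0)$ and of $\breve{\mathbf{A}}(-1)$ are positive; (ii) for every $k\in\mathbb{Z}_+$, $\sum_{l=k}^\infty\mathbf{A}(l)>\mathbf{O}$ and $\sum_{l=k-1}^\infty\breve{\mathbf{A}}(l)>\mathbf{O}$ (elementwise strictly positive).
   Context: BMAP: $M\in\mathbb{N}$, $\mathbb{M}=\{1,\dots,M\}$; $\mathbf{C}$ an $M\times M$ matrix with negative diagonal and nonnegative off-diagonal entries, $\mathbf{D}(k)$ ($k\in\mathbb{N}$) nonnegative $M\times M$ matrices with $(\mathbf{C}+\sum_k\mathbf{D}(k))\mathbf{e}=\mathbf{0}$ ($\mathbf{e}$ column of ones, $\mathbf{I}$ identity); $\mathbf{D}=\sum_k\mathbf{D}(k)$; the BMAP $\{(N(t),J(t))\}$ on $\mathbb{Z}_+\times\mathbb{M}$, $N(0)=0$: $J$ jumps $i\to j\neq i$ without arrivals at rate $[\mathbf{C}]_{ij}$, and $k$ arrivals with a transition $i\to j$ occur at rate $[\mathbf{D}(k)]_{ij}$. $\mathbf{C}+\mathbf{D}$ is irreducible with stationary vector $\boldsymbol{\pi}$ and $\lambda=\boldsymbol{\pi}\sum_kk\mathbf{D}(k)\mathbf{e}>0$. $H$ is a distribution function on $[0,\infty)$ with mean $h\in(0,\infty)$, $T\sim H$ independent of the BMAP, and $\rho=\lambda h<1$. $[\mathbf{A}(k)]_{ij}=\mathbb{P}(N(T)=k,J(T)=j\mid J(0)=i)$, $k\in\mathbb{Z}_+$. Fix $\mu\in(0,\infty)$,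 let $\theta=\max_{i\in\mathbb{M}}|[\mathbf{C}]_{ii}|$, and define $\breve{\mathbf{A}}(-1)=\frac{\mu}{\mu+\theta}\mathbf{A}(0)$, $\breve{\mathbf{A}}(0)=\frac{\theta}{\mu+\theta}\mathbf{I}+\frac{\mu}{\mu+\theta}\mathbf{A}(1)$, $\breve{\mathbf{A}}(k)=\frac{\mu}{\mu+\theta}\mathbf{A}(k+1)$ for $k\in\mathbb{N}$. *)

(* Defs.v *)
From HB Require Import structures.
From mathcomp Require Import all_boot all_order all_algebra.
From mathcomp Require Import all_classical all_reals all_analysis.
Set Implicit Arguments. Unset Strict Implicit. Unset Printing Implicit Defensive.
Import Order.TTheory GRing.Theory Num.Theory numFieldNormedType.Exports.
Local Open Scope classical_set_scope.
Local Open Scope ring_scope.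

Section BMAP.
Variables (R : realType) (M : nat).

Definition theta (C : 'M[R]_M) : R := \big[Num.max/0]_(i < M) `|C i i|.

Definition mxseries (F : nat -> 'M[R]_M) : 'M[R]_M :=
  \matrix_(i, j) limn (fun n => \sum_(0 <= l < n) F l i j).

(* D = sum_{k>=1} D(k) ; the value D 0 is never used (k ranges over N = {1,2,..}) *)
Definition Dsum (D : nat -> 'M[R]_M) : 'M[R]_M :=
  mxseries (fun l => if l is l'.+1 then D l'.+1 else 0).

Definition irreducible_gen (Q : 'M[R]_M) : Prop :=
  forall i j : 'I_M, connect [rel a b | (a != b) && (0 < Q a b)] i j.

(* Uniformization kernel of the BMAP (with rate theta):
   K(0) = I + C/theta, K(k) = D(k)/theta (k >= 1). *)
Definition Kstep (C : 'M[R]_M) (D : nat -> 'M[R]_M) (k : nat) : 'M[R]_M :=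
  if k is k'.+1 then (theta C)^-1 *: D k'.+1 else 1%:M + (theta C)^-1 *: C.

Fixpoint Kpow (C : 'M[R]_M) (D : nat -> 'M[R]_M) (n k : nat) : 'M[R]_M :=
  if n is n'.+1 then \sum_(l < k.+1) Kpow C D n' l *m Kstep C D (k - l)
  else (if k == 0%N then 1%:M else 0).

(* [Ptrans C D k t]_{ij} = P(N(t) = k, J(t) = j | J(0) = i), given by the
   uniformization representation of the BMAP (N(0) = 0). *)
Definition Ptrans (C : 'M[R]_M) (D : nat -> 'M[R]_M) (k : nat) (t : R) : 'M[R]_M :=
  mxseries (fun n => (expR (- (theta C * t)) * (theta C * t) ^+ n / n`!%:R)
                       *: Kpow C D n k).

(* [Amx C D H k]_{ij} = P(N(T) = k, J(T) = j | J(0) = i) with T ~ H independent *)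
Definition Amx (C : 'M[R]_M) (D : nat -> 'M[R]_M) (H : probability R R) (k : nat)
  : 'M[R]_M :=
  \matrix_(i, j) fine (\int[H]_(t in `[0%R, +oo[) (Ptrans C D k t i j)%:E)%E.

Definition Abreve (C : 'M[R]_M) (D : nat -> 'M[R]_M) (H : probability R R)
  (mu : R) (l : int) : 'M[R]_M :=
  match l with
  | Posz 0 => (theta C / (mu + theta C)) *: 1%:M + (mu / (mu + theta C)) *: Amx C D H 1
  | Posz k => (mu / (mu + theta C)) *: Amx C D H k.+1
  | Negz 0 => (mu / (mu + theta C)) *: Amx C D H 0
  | Negz _ => 0
  end.

End BMAP.

(* Main.v *)
Require Import Defs.
From HB Require Import structures.
From mathcomp Require Import all_boot all_order all_algebra.
From mathcomp Require Import all_classical all_reals all_analysis.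
From mathcomp Require Import ring lra.
Import Order.TTheory GRing.Theory Num.Theory numFieldNormedType.Exports.
Local Open Scope classical_set_scope.
Local Open Scope ring_scope.

Import measurable_realfun.

Section S2.
Variables (R : realType) (H : probability R R) (h : R).
Hypothesis Hneg : H `]-oo, 0%R[%classic = 0%E.
Hypothesis Hmean : (\int[H]_x (x%:E) = h%:E)%E.
Hypothesis h0 : 0 < h.

Lemma Hcontra : H `]0%R, +oo[%classic = 0%E -> False.
Proof.
move=> Hpos.
have mx : measurable_fun [set: R] (@EFin R).
  by apply/measurable_EFinP; exact: measurable_id.
have I0 : (\int[H]_x ((fun x : R => x%:E)^\+ x) = 0)%E.
  rewrite (ae_eq_integral (cst 0%E)) //; first exact: integral0.
  - exact: measurable_funepos.
  - exists `]0%R, +oo[%classic; split.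
    + by [].
    + exact: Hpos.
    move=> x /= nx; rewrite in_itv /= andbT ltNge; apply/negP => x0; apply: nx => _.
    by rewrite funeposE /= max_r // lee_fin.
move: Hmean; rewrite integralE I0 add0e => hE.
have : (0 <= \int[H]_x ((fun x : R => x%:E)^\- x))%E.
  by apply: integral_ge0 => x _; exact: funeneg_ge0.
rewrite -[X in (0 <= X)%E]oppeK hE oppe_ge0 lee_fin => /(lt_le_trans h0).
by rewrite ltxx.
Qed.

Lemma int_pos (g : R -> R) : measurable_fun (`[0%R, +oo[ : set R) g ->
  (forall t, 0 <= t -> 0 <= g t) -> (forall t, 0 < t -> 0 < g t) ->
  (0 < \int[H]_(t in `[0%R, +oo[) (g t)%:E)%E.
Proof.
move=> mg g0 gp.
rewrite lt_neqAle integral_ge0 ?andbT; last first.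
  by move=> t; rewrite /= in_itv /= andbT => t0; rewrite lee_fin g0.
apply/negP => /eqP /esym I0.
have : (\int[H]_(t in `[0%R, +oo[) `|(g t)%:E| = 0)%E.
  rewrite -I0; apply: eq_integral => t; rewrite inE /= in_itv /= andbT => t0.
  by rewrite ger0_norm // g0.
move/ae_eq_integral_abs => /(_ (measurable_itv _)).
have mge : measurable_fun (`[0%R, +oo[ : set R) (fun t => (g t)%:E).
  by apply/measurable_EFinP.
move=> /(_ mge) [N [mN HN sN]].
apply: Hcontra; apply: (subset_measure0 (B := N)) => //.
move=> t /=; rewrite in_itv /= andbT => t0; apply: sN => /= /(_ _).
rewrite /= in_itv /= ltW // => /(_ erefl) [] /eqP.
by rewrite (gt_eqF (gp _ t0)).
Qed.
End S2.

Section S1.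
Variables (R : realType) (M : nat) (C : 'M[R]_M) (D : nat -> 'M[R]_M).
Hypothesis M0 : (0 < M)%N.
Hypothesis Cdiag : forall i : 'I_M, C i i < 0.
Hypothesis Coff : forall i j : 'I_M, i != j -> 0 <= C i j.
Hypothesis Dnn : forall (k : nat) (i j : 'I_M), 0 <= D k.+1 i j.
Hypothesis Drow : forall i : 'I_M,
     (fun n : nat => \sum_(1 <= k < n) \sum_(j < M) D k i j) @ \oo --> - \sum_(j < M) C i j.

Lemma Cabs_le i : `|C i i| <= theta C.
Proof. by rewrite /theta (le_bigmax _ (fun i => `|C i i|) i). Qed.

Lemma th_gt0 : 0 < theta C.
Proof.
have i : 'I_M := Ordinal M0.
by apply: lt_le_trans (Cabs_le i); rewrite normr_gt0 lt_eqF.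
Qed.

Lemma Cdiag_ge i : - theta C <= C i i.
Proof.
have := Cabs_le i; rewrite ltr0_norm ?Cdiag //.
by rewrite lerNl.
Qed.

Lemma Kstep0E i j : Kstep C D 0 i j = (i == j)%:R + (theta C)^-1 * C i j.
Proof. by rewrite /Kstep !mxE. Qed.

Lemma KstepSE m i j : Kstep C D m.+1 i j = (theta C)^-1 * D m.+1 i j.
Proof. by rewrite /Kstep !mxE. Qed.

Lemma Kstep_ge0 m i j : 0 <= Kstep C D m i j.
Proof.
have th0 := th_gt0.
case: m => [|m]; last by rewrite KstepSE mulr_ge0 // invr_ge0 ltW.
rewrite Kstep0E; case: eqP => [<-|/eqP ij].
  have -> : 1 + (theta C)^-1 * C i i = (theta C)^-1 * (theta C + C i i).
    by rewrite mulrDr mulVf // lt0r_neq0.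
  apply: mulr_ge0; first by rewrite invr_ge0 ltW.
  by have := Cdiag_ge i; lra.
by rewrite /= add0r; apply: mulr_ge0; [rewrite invr_ge0 ltW // | exact: Coff].
Qed.

Lemma Drow_le i n : \sum_(1 <= k < n) \sum_(j < M) D k i j <= - \sum_(j < M) C i j.
Proof.
have nd : nondecreasing_seq (fun n : nat => \sum_(1 <= k < n) \sum_(j < M) D k i j).
  apply/nondecreasing_seqP => m.
  case: m => [|m]; first by rewrite !big_geq.
  rewrite (big_nat_recr m.+1) //= lerDl; apply: sumr_ge0 => j _; exact: Dnn.
rewrite -(cvg_lim _ (Drow i)) //; apply: nondecreasing_cvgn_le => //.
by apply/cvg_ex; eexists; exact: Drow.
Qed.

Lemma Kstep_row N i : \sum_(0 <= m < N) \sum_j Kstep C D m i j <= 1.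
Proof.
have th0 := th_gt0.
case: N => [|N]; first by rewrite big_geq.
rewrite big_ltn // (eq_bigr (fun j => (i == j)%:R + (theta C)^-1 * C i j));
  last by move=> j _; rewrite Kstep0E.
rewrite big_split /= (bigD1 i) //= eqxx big1 => [|j ji]; last by rewrite eq_sym (negbTE ji).
rewrite addr0 -mulr_sumr.
rewrite (@eq_big_nat _ _ _ 1 N.+1 _ (fun m => (theta C)^-1 * \sum_j D m i j)); last first.
  move=> [|m] /andP[] // _ _; rewrite mulr_sumr; apply: eq_bigr => j _; exact: KstepSE.
rewrite -mulr_sumr.
have := Drow_le i N.+1.
have ti : 0 < (theta C)^-1 by rewrite invr_gt0.
set a := \sum_(1 <= k < N.+1) _; set b := \sum_(j < M) C i j => h.
have : (theta C)^-1 * a <= (theta C)^-1 * (- b) by rewrite ler_pM2l.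
rewrite /= ?mulr1n; lra.
Qed.

Lemma tri (f : nat -> nat -> R) N :
  \sum_(0 <= k < N) \sum_(0 <= l < k.+1) f l (k - l)%N =
  \sum_(0 <= l < N) \sum_(0 <= m < N - l) f l m.
Proof.
elim: N => [|N IH]; first by rewrite !big_geq.
rewrite big_nat_recr //= IH [in RHS]big_nat_recr //= subSnn big_nat1.
rewrite [X in _ = X + _](@eq_big_nat _ _ _ 0 N _ (fun l => \sum_(0 <= m < N - l) f l m + f l (N - l)%N)); last first.
  move=> l /andP[_ lN]; rewrite subSn ?(ltnW lN) // big_nat_recr //.
rewrite big_split /= -addrA; congr (_ + _).
by rewrite big_nat_recr //= subnn.
Qed.

Lemma KpowSE n k i j : Kpow C D n.+1 k i j =
  \sum_(0 <= l < k.+1) \sum_a Kpow C D n l i a * Kstep C D (k - l) a j.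
Proof.
rewrite /= summxE big_mkord; apply: eq_bigr => l _; by rewrite mxE.
Qed.

Lemma Kpow_ge0 n k i j : 0 <= Kpow C D n k i j.
Proof.
elim: n k i j => [|n IH] k i j.
  by rewrite /=; case: (k == 0%N); rewrite !mxE ?ler0n.
rewrite KpowSE; apply: sumr_ge0 => l _; apply: sumr_ge0 => a _.
by apply: mulr_ge0; [exact: IH | exact: Kstep_ge0].
Qed.

Lemma Kpow_row n N i : \sum_(0 <= k < N) \sum_j Kpow C D n k i j <= 1.
Proof.
elim: n N i => [|n IH] N i.
  case: N => [|N]; first by rewrite big_geq.
  rewrite big_ltn //= [X in _ + X]big_nat_cond [X in _ + X]big1; last first.
    move=> k /andP[] /andP[] k0 _ _; rewrite -(prednK k0) /=.
    by apply: big1 => j _; rewrite mxE.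
  rewrite addr0 (bigD1 i) //= !mxE eqxx big1 => [|j ji]; last by rewrite mxE eq_sym (negbTE ji).
  by rewrite addr0.
pose F l m := \sum_a Kpow C D n l i a * \sum_j Kstep C D m a j.
have E k : \sum_j Kpow C D n.+1 k i j = \sum_(0 <= l < k.+1) F l (k - l)%N.
  rewrite (eq_bigr _ (fun j _ => KpowSE n k i j)) exchange_big; apply: eq_bigr => l _.
  rewrite exchange_big; apply: eq_bigr => a _; by rewrite mulr_sumr.
rewrite (eq_bigr _ (fun k _ => E k)) tri.
apply: le_trans (IH N i); apply: ler_sum => l _.
rewrite /F exchange_big; apply: ler_sum => a _ /=; rewrite -mulr_sumr.
rewrite -[leRHS]mulr1; apply: ler_wpM2l; [exact: Kpow_ge0 | exact: Kstep_row].
Qed.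

Lemma Kpow_le1 l k i j : Kpow C D l k i j <= 1.
Proof.
apply: le_trans (Kpow_row l k.+1 i).
rewrite big_nat_recr //= -[X in X <= _]add0r; apply: lerD.
  apply: sumr_ge0 => k' _; apply: sumr_ge0 => j' _; exact: Kpow_ge0.
rewrite (bigD1 j) //= lerDl; apply: sumr_ge0 => j' _; exact: Kpow_ge0.
Qed.

Definition uterm k i j (t : R) l :=
  expR (- (theta C * t)) * (theta C * t) ^+ l / l`!%:R * Kpow C D l k i j.

Lemma PtransE k t i j :
  Ptrans C D k t i j = limn (fun n => \sum_(0 <= l < n) uterm k i j t l).
Proof.
rewrite /Ptrans /mxseries mxE; congr (lim (_ @ \oo)); apply/funext => n.
by apply: eq_bigr => l _; rewrite mxE.
Qed.

Lemma uterm_ge0 k i j t l : 0 <= t -> 0 <= uterm k i j t l.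
Proof.
move=> t0; have th0 := th_gt0.
rewrite /uterm; apply: mulr_ge0; last exact: Kpow_ge0.
apply: divr_ge0 => //; apply: mulr_ge0; first exact: expR_ge0.
by apply: exprn_ge0; apply: mulr_ge0 => //; exact: ltW.
Qed.

Lemma expsum_le (x : R) n : 0 <= x -> \sum_(0 <= l < n) x ^+ l / l`!%:R <= expR x.
Proof.
move=> x0.
have nd : nondecreasing_seq (series (exp_coeff x)).
  apply/nondecreasing_seqP => m; rewrite /series /= big_nat_recr //= lerDl.
  by rewrite /exp_coeff /=; apply: divr_ge0 => //; exact: exprn_ge0.
have := nondecreasing_cvgn_le nd (is_cvg_series_exp_coeff x) n.
by rewrite /series /exp_coeff /=.
Qed.

Lemma psum_le1 k i j t n : 0 <= t -> \sum_(0 <= l < n) uterm k i j t l <= 1.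
Proof.
move=> t0; have th0 := th_gt0; set x := theta C * t.
have x0 : 0 <= x by apply: mulr_ge0 => //; exact: ltW.
apply: (@le_trans _ _ (\sum_(0 <= l < n) expR (- x) * (x ^+ l / l`!%:R))).
  apply: ler_sum => l _; rewrite /uterm -/x mulrA -[leRHS]mulr1.
  apply: ler_wpM2l; last exact: Kpow_le1.
  apply: divr_ge0 => //; apply: mulr_ge0; first exact: expR_ge0.
  exact: exprn_ge0.
rewrite -mulr_sumr; apply: (@le_trans _ _ (expR (- x) * expR x)).
  by apply: ler_wpM2l; [exact: expR_ge0 | exact: expsum_le].
by rewrite expRN mulVf // lt0r_neq0 // expR_gt0.
Qed.

Lemma psum_nd k i j t : 0 <= t ->
  nondecreasing_seq (fun n => \sum_(0 <= l < n) uterm k i j t l).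
Proof.
move=> t0; apply/nondecreasing_seqP => m; rewrite big_nat_recr //= lerDl.
exact: uterm_ge0.
Qed.

Lemma Ptrans_cvg k i j t : 0 <= t ->
  cvgn (fun n => \sum_(0 <= l < n) uterm k i j t l).
Proof.
move=> t0; apply: nondecreasing_is_cvgn; first exact: psum_nd.
by exists 1 => _ [n _ <-]; exact: psum_le1.
Qed.

Lemma Ptrans_ge_term k i j t l : 0 <= t -> uterm k i j t l <= Ptrans C D k t i j.
Proof.
move=> t0; rewrite PtransE.
have := nondecreasing_cvgn_le (psum_nd k i j t t0) (Ptrans_cvg k i j t t0) l.+1.
apply: le_trans.
rewrite big_nat_recr //= lerDr; apply: sumr_ge0 => l' _; exact: uterm_ge0.
Qed.

Lemma Ptrans_ge0 k i j t : 0 <= t -> 0 <= Ptrans C D k t i j.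
Proof. move=> t0; apply: le_trans (Ptrans_ge_term k i j t 0 t0); exact: uterm_ge0. Qed.

Lemma Ptrans_le1 k i j t : 0 <= t -> Ptrans C D k t i j <= 1.
Proof.
move=> t0; rewrite PtransE; apply: limr_le; first exact: Ptrans_cvg.
by apply: nearW => n; exact: psum_le1.
Qed.

Import measurable_realfun.

Lemma uterm_mble k i j l (A : set R) : measurable_fun A (fun t => uterm k i j t l).
Proof.
have h1 : measurable_fun A (fun t : R => theta C * t) by apply: measurable_funM.
rewrite /uterm.
apply: measurable_funM => //.
apply: measurable_funM => //.
apply: measurable_funM => //.
  exact: (measurableT_comp (@measurable_expR R) (measurable_funN h1)).
exact: measurable_funX.
Qed.

Lemma Ptrans_mble (k : nat) (i j : 'I_M) :
  measurable_fun (`[0%R, +oo[ : set R) (fun t : R => Ptrans C D k t i j).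
Proof.
apply: (measurable_fun_cvg (h := fun n t => \sum_(0 <= l < n) uterm k i j t l)).
  by move=> n; apply: measurable_sum => l; exact: uterm_mble.
move=> t /=; rewrite in_itv /= andbT => t0; rewrite PtransE.
exact: Ptrans_cvg.
Qed.

Definition reach i j L := exists n, 0 < Kpow C D n L i j.

Lemma reach_refl i : reach i i 0.
Proof. by exists 0%N; rewrite /= !mxE eqxx. Qed.

Lemma reach_step i a b L m : reach i a L -> 0 < Kstep C D m a b -> reach i b (L + m).
Proof.
move=> [n Pn] Kp; exists n.+1; rewrite KpowSE.
have F0 : forall l, 0 <= \sum_c Kpow C D n l i c * Kstep C D (L + m - l) c b.
  move=> l; apply: sumr_ge0 => c _; apply: mulr_ge0; [exact: Kpow_ge0 | exact: Kstep_ge0].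
rewrite (bigD1_seq L) /=; [|by rewrite mem_index_iota ltnS leq_addr | by rewrite mem_iota iota_uniq].
apply: (@lt_le_trans _ _ (\sum_c Kpow C D n L i c * Kstep C D (L + m - L) c b)).
  rewrite (bigD1 a) //= addnC addnK; apply: (@lt_le_trans _ _ (Kpow C D n L i a * Kstep C D m a b)).
    exact: mulr_gt0.
  rewrite lerDl; apply: sumr_ge0 => c _; apply: mulr_ge0; [exact: Kpow_ge0 | exact: Kstep_ge0].
rewrite lerDl; apply: sumr_ge0 => l _; exact: F0.
Qed.

Definition grel := [rel a b : 'I_M | (a != b) && (0 < (C + Dsum D) a b)].

Lemma grel_step a b : grel a b -> exists m, 0 < Kstep C D m a b.
Proof.
move=> /andP[ab]; rewrite mxE.
have [Cp|Cn] := ltP 0 (C a b).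
  move=> _; exists 0%N; rewrite Kstep0E (negbTE ab) /= add0r.
  by apply: mulr_gt0 => //; rewrite invr_gt0 th_gt0.
move=> Dp.
have Dp' : 0 < Dsum D a b.
  have := Coff a b ab; move: Dp Cn; set x := C a b; set y := Dsum D a b => *; lra.
have [[m Dm]|nD] := pselect (exists m, D m.+1 a b != 0).
  exists m.+1; rewrite KstepSE; apply: mulr_gt0; first by rewrite invr_gt0 th_gt0.
  by rewrite lt_neqAle eq_sym Dm Dnn.
exfalso; move: Dp'; rewrite /Dsum /mxseries mxE.
have -> : (fun n => \sum_(0 <= l < n)
     (if l is l'.+1 then D l'.+1 else 0) a b) = fun=> 0.
  apply/funext => n; apply: big1 => -[|l] _; first by rewrite mxE.
  by apply/eqP; apply: contra_notT nD => Dl; exists l.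
by rewrite lim_cst // ltxx.
Qed.

Lemma conn_reach s i L j : reach s i L -> connect grel i j ->
  exists L', (L <= L')%N /\ reach s j L'.
Proof.
move=> ri /connectP [p pth ->]; elim: p i L ri pth => [|a p IH] i L ri /=.
  by move=> _; exists L.
move=> /andP [ia pth].
have [m Km] := @grel_step i a ia.
have [L' [LL' ra]] := IH a (L + m)%N (@reach_step s i a L m ri Km) pth.
by exists L'; split => //; apply: leq_trans LL'; exact: leq_addr.
Qed.

Lemma Dpos (piv : 'rV[R]_M) (lam : R) :
  (fun n : nat => \sum_(1 <= k < n) (k%:R * \sum_(i < M) \sum_(j < M) piv 0 i * D k i j : R)) @ \oo --> lam ->
  0 < lam -> exists m i0 j0, 0 < D m.+1 i0 j0.
Proof.
move=> hl lp.
have [//|nD] := pselect (exists m i0 j0, 0 < D m.+1 i0 j0).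
exfalso.
have D0 : forall m i j, D m.+1 i j = 0.
  move=> m i j; apply/eqP; rewrite eq_le Dnn andbT leNgt; apply/negP => Dp.
  by apply: nD; exists m, i, j.
have := cvg_lim _ hl.
have -> : (fun n : nat => \sum_(1 <= k < n) (k%:R * \sum_(i < M) \sum_(j < M) piv 0 i * D k i j : R)) = fun=> 0.
  apply/funext => n; rewrite big_nat_cond; apply: big1 => -[|k] /andP[/andP[k0 _] _] //.
  by rewrite big1 ?mulr0 // => i _; rewrite big1 // => j _; rewrite D0 mulr0.
rewrite lim_cst // => /(_ _ _)/esym l0; move: lp; rewrite l0 ?ltxx //; exact: Rhausdorff.
Qed.

Lemma reach_all : irreducible_gen (C + Dsum D) ->
  (exists m i0 j0, 0 < D m.+1 i0 j0) ->
  forall k i j, exists L, (k <= L)%N /\ reach i j L.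
Proof.
move=> Hirr [m [i0 [j0 Dp]]].
have Kp : 0 < Kstep C D m.+1 i0 j0.
  by rewrite KstepSE; apply: mulr_gt0 => //; rewrite invr_gt0 th_gt0.
have pump s L : reach s i0 L -> exists L', (L < L')%N /\ reach s i0 L'.
  move=> r; have r' := @reach_step s i0 j0 L m.+1 r Kp.
  have [L' [LL' r'']] := @conn_reach s j0 _ i0 r' (Hirr j0 i0).
  by exists L'; split => //; apply: leq_trans LL'; rewrite addnS ltnS leq_addr.
have iter s k : exists L, (k <= L)%N /\ reach s i0 L.
  elim: k => [|k [L [kL r]]].
    have [L [_ r]] := @conn_reach s s _ i0 (reach_refl s) (Hirr s i0).
    by exists L.
  have [L' [LL' r']] := pump s L r.
  by exists L'; split => //; apply: leq_ltn_trans LL'.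
move=> k i j; have [L [kL r]] := iter i k.
have [L' [LL' r']] := @conn_reach i i0 _ j r (Hirr i0 j).
by exists L'; split => //; apply: leq_trans LL'.
Qed.

Variables (H : probability R R) (h : R).
Hypothesis Hneg : H `]-oo, 0%R[%classic = 0%E.
Hypothesis Hmean : (\int[H]_x (x%:E) = h%:E)%E.
Hypothesis h0 : 0 < h.

Lemma Amx_ge0 k i j : 0 <= Amx C D H k i j.
Proof.
rewrite mxE; apply: fine_ge0; apply: integral_ge0 => t.
by rewrite /= in_itv /= andbT => t0; rewrite lee_fin Ptrans_ge0.
Qed.

Lemma Amx_pos k i j n : 0 < Kpow C D n k i j -> 0 < Amx C D H k i j.
Proof.
move=> Kp; rewrite mxE.
have mD : measurable (`[0%R, +oo[ : set R) by exact: measurable_itv.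
have mP : measurable_fun (`[0%R, +oo[ : set R) (fun t => (Ptrans C D k t i j)%:E).
  by apply/measurable_EFinP; exact: Ptrans_mble.
have P0 : forall t, `[0%R, +oo[%classic t -> (0 <= (Ptrans C D k t i j)%:E)%E.
  by move=> t; rewrite /= in_itv /= andbT => t0; rewrite lee_fin Ptrans_ge0.
apply: fine_gt0; apply/andP; split.
  apply: (@lt_le_trans _ _ (\int[H]_(t in `[0%R, +oo[) (uterm k i j t n)%:E)%E).
    apply: (@int_pos R H h Hmean h0 (fun t => uterm k i j t n)).
    - exact: uterm_mble.
    - by move=> t t0; exact: uterm_ge0.
    move=> t t0; rewrite /uterm; apply: mulr_gt0 => //.
    apply: divr_gt0; last by rewrite ltr0n fact_gt0.
    apply: mulr_gt0; first exact: expR_gt0.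
    by apply: exprn_gt0; apply: mulr_gt0 => //; exact: th_gt0.
  apply: ge0_le_integral => //.
  - by move=> t; rewrite /= in_itv /= andbT => t0; rewrite lee_fin uterm_ge0.
  - by apply/measurable_EFinP; exact: uterm_mble.
  by move=> t; rewrite /= in_itv /= andbT => t0; rewrite lee_fin Ptrans_ge_term.
apply: (@le_lt_trans _ _ 1%E); last exact: ltry.
apply: (@le_trans _ _ (\int[H]_(t in `[0%R, +oo[) (cst 1%E) t)%E).
  apply: ge0_le_integral => //.
  by move=> t; rewrite /= in_itv /= andbT => t0; rewrite lee_fin Ptrans_le1.
by rewrite integral_cst // mul1e probability_le1.
Qed.
Lemma Abreve_ge mu l i j : 0 < mu ->
  mu / (mu + theta C) * Amx C D H l i j <= Abreve C D H mu (l%:Z - 1) i j.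
Proof.
move=> mu0.
case: l => [|[|n]].
- by rewrite /Abreve /= !mxE.
- rewrite /Abreve /= !mxE lerDr; apply: mulr_ge0; last exact: ler0n.
  apply: divr_ge0; first exact: ltW th_gt0.
  by apply: addr_ge0; [exact: ltW | exact: ltW th_gt0].
- have -> : (n.+2%:Z - 1 = Posz n.+1)%R by rewrite -addn1 PoszD addrK.
  by rewrite /Abreve /= !mxE.
Qed.

Lemma ser_pos (u : nat -> R) k L : (k <= L)%N -> (forall l, 0 <= u l) -> 0 < u L ->
  (0 < \sum_(k <= l <oo) (u l)%:E)%E.
Proof.
move=> kL u0 uL.
have := @nneseries_lim_ge R (fun l => (u l)%:E) xpredT k L.+1.
move=> /(_ (fun n _ _ => u0 n)) h1.
apply: (lt_le_trans _ h1).
rewrite big_nat_recr //=.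
apply: (@lt_le_trans _ _ (u L)%:E); first by rewrite lte_fin.
apply: leeDr; apply: sume_ge0 => l _; by rewrite lee_fin.
Qed.

Lemma main_sec mu : 0 < mu -> irreducible_gen (C + Dsum D) ->
  (exists m i0 j0, 0 < D m.+1 i0 j0) ->
  (forall i : 'I_M, 0 < Amx C D H 0 i i) /\
  (forall i : 'I_M, 0 < Abreve C D H mu (-1) i i) /\
  (forall (k : nat) (i j : 'I_M),
     (0 < \sum_(k <= l <oo) (Amx C D H l i j)%:E)%E /\
     (0 < \sum_(k <= l <oo) (Abreve C D H mu (l%:Z - 1) i j)%:E)%E).
Proof.
move=> mu0 Hirr Dex.
have c0 : 0 < mu / (mu + theta C).
  by apply: divr_gt0 => //; apply: addr_gt0 => //; exact: th_gt0.
have A0 i : 0 < Amx C D H 0 i i.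
  have [n Pn] := reach_refl i; exact: Amx_pos Pn.
split; first exact: A0.
split.
  move=> i; have := Abreve_ge mu 0 i i mu0; apply: lt_le_trans.
  exact: mulr_gt0.
move=> k i j; have [L [kL [n Pn]]] := reach_all Hirr Dex k i j.
have AL : 0 < Amx C D H L i j by exact: Amx_pos Pn.
split.
  apply: (@ser_pos (fun l => Amx C D H l i j) k L kL) => //.
  by move=> l; exact: Amx_ge0.
apply: (@ser_pos (fun l => Abreve C D H mu (l%:Z - 1) i j) k L kL).
- move=> l; apply: le_trans (Abreve_ge mu l i j mu0).
  by apply: mulr_ge0; [exact: ltW | exact: Amx_ge0].
- apply: lt_le_trans (Abreve_ge mu L i j mu0); exact: mulr_gt0.
Qed.

End S1.

Theorem lemma8 (R : realType) (M : nat) (C : 'M[R]_M) (D : nat -> 'M[R]_M)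
    (piv : 'rV[R]_M) (lam : R) (H : probability R R) (h mu : R) :
  (0 < M)%N ->
  (forall i : 'I_M, C i i < 0) ->
  (forall i j : 'I_M, i != j -> 0 <= C i j) ->
  (forall (k : nat) (i j : 'I_M), 0 <= D k.+1 i j) ->
  (* (C + sum_{k>=1} D(k)) e = 0, the series of row sums converging *)
  (forall i : 'I_M,
     (fun n : nat => \sum_(1 <= k < n) \sum_(j < M) D k i j) @ \oo --> - \sum_(j < M) C i j) ->
  irreducible_gen (C + Dsum D) ->
  (* piv is the stationary (probability) vector of C + D *)
  (forall j : 'I_M, 0 <= piv 0 j) ->
  \sum_(j < M) piv 0 j = 1 ->
  piv *m (C + Dsum D) = 0 ->
  (* lam = piv (sum_k k D(k)) e > 0 *)
  (fun n : nat => \sum_(1 <= k < n) (k%:R * \sum_(i < M) \sum_(j < M) piv 0 i * D k i j : R)) @ \oo --> lam ->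
  0 < lam ->
  (* H is a distribution on [0, oo) with mean h in (0, oo) *)
  H `]-oo, 0%R[%classic = 0%E ->
  (\int[H]_x (x%:E) = h%:E)%E ->
  0 < h ->
  lam * h < 1 ->
  0 < mu ->
  (forall i : 'I_M, 0 < Amx C D H 0 i i) /\
  (forall i : 'I_M, 0 < Abreve C D H mu (-1) i i) /\
  (forall (k : nat) (i j : 'I_M),
     (0 < \sum_(k <= l <oo) (Amx C D H l i j)%:E)%E /\
     (0 < \sum_(k <= l <oo) (Abreve C D H mu (l%:Z - 1) i j)%:E)%E).
Proof.
move=> M0 Cd Co Dn Dr Hirr _ _ _ hl lp _ Hm h0 _ mu0.
have Dex := @Dpos R M D Dn piv lam hl lp.
exact: (@main_sec R M C D M0 Cd Co Dn Dr H h Hm h0 mu mu0 Hirr Dex).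
Qed.
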